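(* Let $G$ be a simple loopless graph on $[L]$ and $p\ge1$. The map $\Phi_p:\Pi_{2p}(G)\to\mathcal{P}_{2p}(G)$ is injective.
   Context: $\mathcal{T}(G)=\langle v\in[L]: uv=vu \text{ for } (u,v)\in E(G)\rangle$ is the trace monoid of $G$, $e$ the empty word. Words are adjacent, $w_1\leftrightarrow w_2$, if $w_1=vw_2$ or $w_2=vw_1$ for a letter $v$. $\mathcal{P}_{2p}(G)=\{w\in\mathcal{T}(G)^{2p}: e\leftrightarrow w_1\leftrightarrow\cdots\leftrightarrow w_{2p}=e\}$. $P_2(2p)$ is the set of pair partitions of $[2p]$; blocks $\{u_1,v_1\},\{u_2,v_2\}$ cross if $u_1<u_2<v_1<v_2$; $F_\pi$ is the graph on the blocks of $\pi$ with edges between crossing blocks. $\Pi_{2p}(G)=\{(\pi,\phi):\pi\in P_2(2p),\ \phi\in\operatorname{Hom}(F_\pi,G)\}$. Definition of $\Phi_p$ (it takes values in $\mathcal{P}_{2p}(G)$): (1) For $p=1$, if $\phi$ assigns label $i$ to the block $\{1,2\}$, $\Phi_1(\pi,\phi)=(i,e)$. (2) Given $\Phi_p$ and $(\pi,\phi)\in\Pi_{2(p+1)}(G)$, let $r$ be the smallest index that is the larger element of its block, $U=\{s,r\}\in\pi$ with $s<r$, $i_s=\phi(U)$, $\sigma=\pi\setminus\{U\}$, $\psi=\phi|_\sigma$. Identify $P_2([2(p+1)]\setminus\{s,r\})$ with $P_2(2p)$ via the order-preserving bijection, write $u=\Phi_p(\sigma,\psi)=(u_k)_{k\in[2(p+1)]\setminus\{s,r\}}$,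 and let $u_{k^-}$ be $u_j$ for the largest $j<k$, $j\notin\{s,r\}$, or $e$ if none exists. Then $\Phi_{p+1}(\pi,\phi)_k=u_k$ for $k<s$; $i_su_{s^-}$ for $k=s$; $i_su_k$ for $s<k<r$; $u_{r^-}$ for $k=r$; $u_k$ for $k>r$. *)

(* Defs.v *)
From mathcomp Require Import all_boot.
From Stdlib Require Import Relations.
Set Implicit Arguments. Unset Strict Implicit. Unset Printing Implicit Defensive.

(* Elements of T(G) are represented by words
   (seq 'I_L); equality in T(G) is the congruence generated by uv = vu for
   every edge (u,v) of G, i.e. the equivalence closure of swapping two
   adjacent commuting letters. *)
Inductive trace_step (L : nat) (G : rel 'I_L) : seq 'I_L -> seq 'I_L -> Prop :=
| ts_swap (s1 s2 : seq 'I_L) (u v : 'I_L) :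
    G u v -> trace_step G (s1 ++ u :: v :: s2) (s1 ++ v :: u :: s2).

Definition trace_eq (L : nat) (G : rel 'I_L) : relation (seq 'I_L) :=
  clos_refl_sym_trans _ (trace_step G).

Definition simple_loopless (L : nat) (G : rel 'I_L) : Prop :=
  ssrbool.symmetric G /\ ssrbool.irreflexive G.

(* A pair partition pi of [n] is
   represented by its partner map (a fixed-point free involution of [n]):
   the blocks are {k, pi k}.  A labelling phi of the blocks is represented
   by a map lab on positions that is constant on blocks (lab (pi k) = lab k),
   phi({k, pi k}) = lab k.  Only the values on [n] matter. *)
Definition in_range (n k : nat) : bool := (1 <= k <= n).

Definition is_pair_partition (n : nat) (pi : nat -> nat) : Prop :=
  forall k, in_range n k -> [/\ in_range n (pi k), pi k != k & pi (pi k) = k].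

Definition crossing (pi : nat -> nat) (a b : nat) : bool :=
  let u1 := minn a (pi a) in let v1 := maxn a (pi a) in
  let u2 := minn b (pi b) in let v2 := maxn b (pi b) in
  [&& u1 < u2, u2 < v1 & v1 < v2].

(* (pi, lab) is an element of Pi_n(G): lab is a well-defined labelling of the
   blocks of pi which is a graph homomorphism F_pi -> G. *)
Definition in_Pi (L : nat) (G : rel 'I_L) (n : nat)
    (pi : nat -> nat) (lab : nat -> 'I_L) : Prop :=
  [/\ is_pair_partition n pi,
      (forall k, in_range n k -> lab (pi k) = lab k) &
      (forall a b, in_range n a -> in_range n b -> crossing pi a b ->
                   G (lab a) (lab b))].

Definition remaining (n s r : nat) : seq nat :=
  [seq k <- iota 1 n | (k != s) && (k != r)].

(* order-preserving bijection [n] \ {s,r} -> [n-2] and its inverse *)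
Definition relab (n s r k : nat) : nat := (index k (remaining n s r)).+1.
Definition unrelab (n s r j : nat) : nat := nth 0 (remaining n s r) j.-1.

Fixpoint Phi (L : nat) (p : nat) (pi : nat -> nat) (lab : nat -> 'I_L)
    {struct p} : nat -> seq 'I_L :=
  match p with
  | 0 => fun _ => [::]
  | p'.+1 =>
    if p' == 0 then
      (* Phi_1 (pi, phi) = (i, e), i the label of the block {1,2} *)
      fun k => if k == 1 then [:: lab 1] else [::]
    else
      let n := (p'.+1).*2 in
      let r := head 0 [seq k <- iota 1 n | pi k < k] in
      let s := pi r in
      let i := lab r in
      let sigma := fun j => relab n s r (pi (unrelab n s r j)) in
      let psi := fun j => lab (unrelab n s r j) in
      let u' := Phi p' sigma psi in
      let u := fun k => u' (relab n s r k) in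
      (* u_{k^-}: u_j for the largest j < k, j not in {s,r}, or e *)
      let uminus := fun k =>
        let js := [seq j <- iota 1 k.-1 | (j != s) && (j != r)] in
        if js is [::] then [::] else u (last 0 js) in
      fun k =>
        if k < s then u k
        else if k == s then i :: uminus s
        else if k < r then i :: u k
        else if k == r then uminus r
        else u k
  end.

(* Main.v *)
Require Import Defs.
From mathcomp Require Import all_boot.
From Stdlib Require Import Relations.
From mathcomp Require Import zify.
Set Implicit Arguments. Unset Strict Implicit. Unset Printing Implicit Defensive.

Lemma count_pw_add (T : eqType) (P Q R : pred T) (s : seq T) :
  (forall a, a \in s -> P a = Q a + R a :> nat) -> count P s = count Q s + count R s.
Proof.
elim: s => //= a s IH H.
rewrite H ?mem_head // IH; last by move=> b Hb; apply: H; rewrite in_cons Hb orbT.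
lia.
Qed.

Lemma count_eq1 (s : seq nat) j (b : bool) : uniq s ->
  count (fun a => (a == j) && b) s = (j \in s) && b.
Proof.
move=> U; case: b; rewrite ?andbT ?andbF.
  by rewrite -(count_uniq_mem j U); apply: eq_count => a; rewrite andbT.
by elim: s {U} => //= ? ? ->; rewrite andbF.
Qed.

Lemma trace_count L (G : rel 'I_L) a b : trace_eq G a b ->
  forall x, count_mem x a = count_mem x b.
Proof.
move=> H y; induction H as [w1 w2 [s1 s2 u v _]| |w1 w2 _ IH|w1 w2 w3 _ IH1 _ IH2] => //.
- rewrite !count_cat /=; lia.
- by rewrite IH1 IH2.
Qed.

Lemma count_pw2 (T : eqType) (P Q P' Q' : pred T) (s : seq T) :
  (forall a, a \in s -> P a + Q a = P' a + Q' a :> nat) ->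
  count P s + count Q s = count P' s + count Q' s.
Proof.
elim: s => //= a s IH H.
have := H a (mem_head _ _).
have := IH (fun b Hb => H b (@mem_behead _ (a :: s) b Hb)).
lia.
Qed.

Definition Cn L n (pi : nat -> nat) (lab : nat -> 'I_L) k x :=
  count (fun a => (a <= k < pi a) && (lab a == x)) (iota 1 n).

Lemma C_step L n pi (lab : nat -> 'I_L) k x :
  is_pair_partition n pi -> in_range n k ->
  Cn n pi lab k x + ((pi k < k) && (lab (pi k) == x)) =
  Cn n pi lab k.-1 x + ((k < pi k) && (lab k == x)).
Proof.
move=> PP kr.
have [pkr pkk ppk] := PP k kr.
have := @count_pw2 _ (fun a => (a <= k < pi a) && (lab a == x))
  (fun a => (a == pi k) && ((pi k < k) && (lab (pi k) == x)))
  (fun a => (a <= k.-1 < pi a) && (lab a == x))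
  (fun a => (a == k) && ((k < pi k) && (lab k == x))) (iota 1 n).
rewrite !count_eq1 ?iota_uniq // !mem_iota.
move: kr pkr; rewrite /in_range => kr pkr.
have -> : (1 <= pi k < 1 + n) by lia.
have -> : (1 <= k < 1 + n) by lia.
rewrite /Cn /=; apply => a; rewrite mem_iota => ar.
have [apr pak ppa] : [/\ in_range n (pi a), pi a != a & pi (pi a) = a].
  by apply: PP; rewrite /in_range; lia.
have [->|ak] := eqVneq a k.
  have -> : (k == pi k) = false by rewrite eq_sym (negbTE pkk).
  have -> : k <= k.-1 = false by lia.
  by rewrite leqnn /= addn0.
have [Ea|apk] := eqVneq a (pi k).
  rewrite Ea ppk /= ltnn andbF addn0 /=.
  case: (ltnP (pi k) k) => H /=.
    have -> : k.-1 < k by lia.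
    have -> : pi k <= k.-1 by lia.
    by [].
  have -> : pi k <= k.-1 = false by lia.
  by [].
have pak' : pi a != k.
  apply/eqP => E; move/eqP: apk; apply; by rewrite -E ppa.
rewrite /= !addn0.
have -> : (a <= k) = (a <= k.-1) by apply/idP/idP; move: ak; lia.
have -> : (k < pi a) = (k.-1 < pi a) by apply/idP/idP; move: pak' ak; lia.
by [].
Qed.

Lemma C0 L n pi (lab : nat -> 'I_L) x : Cn n pi lab 0 x = 0.
Proof.
rewrite /Cn (eq_in_count (a2 := pred0)) ?count_pred0 // => a; rewrite mem_iota; by case: a.
Qed.

Definition Ag L (pi1 pi2 : nat -> nat) (lab1 lab2 : nat -> 'I_L) k :=
  forall j, 1 <= j <= k ->
    [/\ lab1 j = lab2 j, (pi1 j < j) = (pi2 j < j) & (pi1 j < j -> pi1 j = pi2 j)].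

Lemma Ag_sym L pi1 pi2 (lab1 lab2 : nat -> 'I_L) k :
  Ag pi1 pi2 lab1 lab2 k -> Ag pi2 pi1 lab2 lab1 k.
Proof.
move=> H j jr; have [E1 E2 E3] := H j jr; split => //.
move=> h; rewrite -E2 in h; by rewrite E3.
Qed.

Lemma cross_contra L (G : rel 'I_L) n pi1 pi2 lab1 lab2 K :
  irreflexive G -> in_Pi G n pi1 lab1 -> is_pair_partition n pi2 ->
  (forall k, in_range n k -> lab2 (pi2 k) = lab2 k) ->
  in_range n K -> pi1 K < pi2 K < K -> lab1 K = lab2 K ->
  Ag pi1 pi2 lab1 lab2 K.-1 -> False.
Proof.
move=> irr [PP1 L1 C1] PP2 L2 Kr lt EK AG.
have [pKr pKK ppK] := PP1 K Kr.
have [qKr qKK qqK] := PP2 K Kr.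
set b := pi2 K in lt qKr qKK qqK *.
move: (Kr) (qKr); rewrite /in_range => Kr' br'.
have [E1 E2 E3] := AG b ltac:(lia).
have [pbr pbb ppb] := PP1 b qKr.
have h1 : b < pi1 b.
  have : (pi1 b < b) = false by rewrite E2 qqK; apply/negbTE; rewrite -leqNgt; lia.
  move/negbT; rewrite -leqNgt => h; move: pbb; lia.
have h2 : pi1 b != K.
  apply/eqP => E; have : pi1 (pi1 b) = pi1 K by rewrite E.
  rewrite ppb => E'; move: lt; rewrite -E'; lia.
have h3 : K < pi1 b.
  rewrite ltnNge leq_eqVlt negb_or h2 /=; apply/negP => h.
  set c := pi1 b in h1 h2 h pbr pbb ppb *.
  move: (pbr); rewrite /in_range => cr.
  have [F1 F2 F3] := AG c ltac:(lia).
  have := F3 ltac:(rewrite ppb; lia).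
  rewrite ppb => Eb.
  have [_ _ qqc] := PP2 c pbr.
  move: qqc; rewrite -Eb qqK => Ec.
  by move: h2; rewrite Ec eqxx.
have : G (lab1 K) (lab1 b).
  apply: C1 => //.
  rewrite /crossing /=; apply/and3P; split; lia.
rewrite E1 /b L2 // -EK.
by rewrite irr.
Qed.

Lemma inj_from_counts L (G : rel 'I_L) n pi1 pi2 lab1 lab2 :
  irreflexive G -> in_Pi G n pi1 lab1 -> in_Pi G n pi2 lab2 ->
  (forall k, in_range n k -> forall x, Cn n pi1 lab1 k x = Cn n pi2 lab2 k x) ->
  forall k, in_range n k -> pi1 k = pi2 k /\ lab1 k = lab2 k.
Proof.
move=> irr P1 P2 HC.
have P1' := P1; have P2' := P2.
case: P1' => [PP1 L1 _]; case: P2' => [PP2 L2 _].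
have AGn : forall k, k <= n -> Ag pi1 pi2 lab1 lab2 k.
  elim=> [|k IH] kn; first by move=> j; lia.
  have AGk := IH (ltnW kn).
  move=> j jr.
  have [jk|jK] : j <= k \/ j = k.+1 by lia.
    by apply: AGk; lia.
  subst j.
  have Kr : in_range n k.+1 by rewrite /in_range; lia.
  have Ek : forall x, Cn n pi1 lab1 k x = Cn n pi2 lab2 k x.
    move=> x; clear -HC kn; case: k kn => [|k] kn; first by rewrite !C0.
    apply: HC; rewrite /in_range; lia.
  have EK := HC _ Kr.
  have S1 := fun x => @C_step L n pi1 lab1 k.+1 x PP1 Kr.
  have S2 := fun x => @C_step L n pi2 lab2 k.+1 x PP2 Kr.
  have [pKr pKK ppK] := PP1 _ Kr.
  have [qKr qKK qqK] := PP2 _ Kr.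
  rewrite /= in S1 S2.
  case: (ltnP (pi1 k.+1) k.+1) => b1; case: (ltnP (pi2 k.+1) k.+1) => b2.
  -
    have s1 := S1 (lab1 (pi1 k.+1)); have s2 := S2 (lab1 (pi1 k.+1)).
    rewrite b1 b2 eqxx /= ltnNge (ltnW b1) ltnNge (ltnW b2) /= in s1 s2.
    have el : lab2 (pi2 k.+1) = lab1 (pi1 k.+1).
      apply/eqP; move: s1 s2; rewrite EK Ek.
      case: (lab2 (pi2 k.+1) == lab1 (pi1 k.+1)) => //=; lia.
    have eK : lab1 k.+1 = lab2 k.+1 by rewrite -L1 // -L2 // el.
    split => // _; case: (ltngtP (pi1 k.+1) (pi2 k.+1)) => // h.
    + by exfalso; apply: (cross_contra irr P1 PP2 L2 Kr _ eK); [rewrite h b2|].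
    + exfalso; apply: (cross_contra irr P2 PP1 L1 Kr _ (esym eK)).
        by rewrite h b1.
      exact: Ag_sym.
  -
    have s1 := S1 (lab2 k.+1); have s2 := S2 (lab2 k.+1).
    have b2' : k.+1 < pi2 k.+1 by move: qKK b2; lia.
    have b2'' : (pi2 k.+1 < k.+1) = false by lia.
    rewrite b1 ltnNge (ltnW b1) /= in s1.
    rewrite b2' b2'' eqxx /= in s2.
    by move: s1 s2; rewrite EK Ek; lia.
  - have s1 := S1 (lab1 k.+1); have s2 := S2 (lab1 k.+1).
    have b1' : k.+1 < pi1 k.+1 by move: pKK b1; lia.
    have b1'' : (pi1 k.+1 < k.+1) = false by lia.
    rewrite b2 ltnNge (ltnW b2) /= in s2.
    rewrite b1' b1'' eqxx /= in s1.
    by move: s1 s2; rewrite EK Ek; lia.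
  - have s1 := S1 (lab1 k.+1); have s2 := S2 (lab1 k.+1).
    have b1' : k.+1 < pi1 k.+1 by move: pKK b1; lia.
    have b1'' : (pi1 k.+1 < k.+1) = false by lia.
    have b2' : k.+1 < pi2 k.+1 by move: qKK b2; lia.
    have b2'' : (pi2 k.+1 < k.+1) = false by lia.
    rewrite b1'' b1' eqxx /= in s1.
    rewrite b2'' b2' /= in s2.
    have eK : lab2 k.+1 = lab1 k.+1.
      apply/eqP; move: s1 s2; rewrite EK Ek.
      case: (lab2 k.+1 == lab1 k.+1) => //=; lia.
    by split.
move=> k kr; move: (kr); rewrite /in_range => kr'.
have AG := AGn n (leqnn n).
have [E1 E2 E3] := AG k kr'.
split => //.
case: (ltnP (pi1 k) k) => h; first exact: E3.
have [pkr pkk ppk] := PP1 k kr.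
have h' : k < pi1 k by move: pkk h; lia.
move: (pkr); rewrite /in_range => pkr'.
have [F1 F2 F3] := AG (pi1 k) pkr'.
have := F3 ltac:(by rewrite ppk).
rewrite ppk => e.
have [_ _ qq] := PP2 (pi1 k) pkr.
by rewrite -e in qq.
Qed.

Definition um L (u : nat -> seq 'I_L) s r k :=
  let js := [seq j <- iota 1 k.-1 | (j != s) && (j != r)] in
  if js is [::] then [::] else u (last 0 js).

Definition stepF L (u : nat -> seq 'I_L) (i : 'I_L) s r k :=
  if k < s then u k
  else if k == s then i :: um u s r s
  else if k < r then i :: u k
  else if k == r then um u s r r
  else u k.

Definition Dn L n (pi : nat -> nat) (lab : nat -> 'I_L) s r k x :=
  count (fun a => (a <= k < pi a) && (lab a == x) && (a != s) && (a != r)) (iota 1 n).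

Lemma D0 L n pi (lab : nat -> 'I_L) s r x : Dn n pi lab s r 0 x = 0.
Proof.
rewrite /Dn (eq_in_count (a2 := pred0)) ?count_pred0 // => a; rewrite mem_iota; by case: a.
Qed.

Lemma Dstep L n pi (lab : nat -> 'I_L) s r j x :
  is_pair_partition n pi -> in_range n s -> in_range n r -> pi s = r -> pi r = s ->
  (j == s) || (j == r) -> 1 <= j ->
  Dn n pi lab s r j x = Dn n pi lab s r j.-1 x.
Proof.
move=> PP sr rr ps pr hj j1.
apply: eq_in_count => a; rewrite mem_iota => ar.
have [pr' _ ppa] : [/\ in_range n (pi a), pi a != a & pi (pi a) = a].
  by apply: PP; rewrite /in_range; lia.
case: (eqVneq a s) => [->|aS]; first by rewrite !andbF.
case: (eqVneq a r) => [->|ar']; first by rewrite !andbF.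
rewrite !andbT.
have hpa : pi a != j.
  apply/eqP => E; move: hj => /orP [] /eqP ej.
    by move/eqP: ar'; apply; rewrite -ppa E ej.
  by move/eqP: aS; apply; rewrite -ppa E ej.
have haj : a != j.
  by apply/eqP => E; move: hj; rewrite -E (negbTE aS) (negbTE ar').
have -> : (a <= j) = (a <= j.-1) by apply/idP/idP; move: haj; lia.
have -> : (j < pi a) = (j.-1 < pi a) by apply/idP/idP; move: hpa j1; lia.
by [].
Qed.

Lemma Dlast L n pi (lab : nat -> 'I_L) s r x :
  is_pair_partition n pi -> in_range n s -> in_range n r -> pi s = r -> pi r = s ->
  forall m, Dn n pi lab s r m x =
    (if [seq j <- iota 1 m | (j != s) && (j != r)] is [::] then 0
     else Dn n pi lab s r (last 0 [seq j <- iota 1 m | (j != s) && (j != r)]) x).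
Proof.
move=> PP sr rr ps pr; elim=> [|m IH]; first by rewrite D0.
rewrite -addn1 iotaD filter_cat /=.
case: (boolP ((1 + m != s) && (1 + m != r))) => h.
  by rewrite last_cat /= addnC; case: [seq _ <- _ | _].
rewrite cats0 -IH addn1 (@Dstep _ _ _ _ _ _ m.+1) //.
by move: h; rewrite negb_and !negbK add1n.
Qed.

Lemma C_D L n pi (lab : nat -> 'I_L) s r k x :
  is_pair_partition n pi -> in_range n s -> in_range n r -> pi s = r -> pi r = s -> s < r ->
  Cn n pi lab k x = Dn n pi lab s r k x + ((s <= k < r) && (lab s == x)).
Proof.
move=> PP sr rr ps pr sltr.
have -> : ((s <= k < r) && (lab s == x)) = (s \in iota 1 n) && ((s <= k < r) && (lab s == x)).
  rewrite mem_iota; move: (sr); rewrite /in_range => sr'.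
  by have -> : (1 <= s < 1 + n) by lia.
rewrite /Cn /Dn -(@count_eq1 (iota 1 n) s ((s <= k < r) && (lab s == x))) ?iota_uniq //.
apply: count_pw_add => a; rewrite mem_iota => ar.
case: (eqVneq a s) => [->|aS]; first by rewrite ps /= !andbF.
case: (eqVneq a r) => [->|aR].
  rewrite pr /= !andbF /=.
  have -> : (r <= k < s) = false by lia.
  by [].
by rewrite !andbT /= addn0.
Qed.

Lemma um_count L n pi (lab : nat -> 'I_L) s r (u : nat -> seq 'I_L) x :
  is_pair_partition n pi -> in_range n s -> in_range n r -> pi s = r -> pi r = s ->
  (forall j, 1 <= j <= n -> j != s -> j != r -> count_mem x (u j) = Dn n pi lab s r j x) ->
  forall k, k <= n.+1 -> count_mem x (um u s r k) = Dn n pi lab s r k.-1 x.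
Proof.
move=> PP sr rr ps pr Hu k kn.
rewrite (Dlast lab x PP sr rr ps pr) /um.
case E: [seq _ <- _ | _] => [|a l] //=.
have : last a l \in [seq j <- iota 1 k.-1 | (j != s) && (j != r)].
  by rewrite E mem_last.
rewrite mem_filter mem_iota => /andP [/andP [h1 h2] h3].
apply: Hu => //; case/andP: h3 => h3 h4; rewrite h3 /=; rewrite add1n ltnS in h4; apply: leq_trans h4 _; lia.
Qed.

Lemma stepF_count L n pi (lab : nat -> 'I_L) s r (u : nat -> seq 'I_L) x :
  is_pair_partition n pi -> 1 <= s -> s < r -> r <= n -> pi r = s -> lab s = lab r ->
  (forall j, 1 <= j <= n -> j != s -> j != r -> count_mem x (u j) = Dn n pi lab s r j x) ->
  forall k, in_range n k -> count_mem x (stepF u (lab r) s r k) = Cn n pi lab k x.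
Proof.
move=> PP s1 sltr rn pr ls Hu k kr.
have rr : in_range n r by rewrite /in_range; lia.
have sr : in_range n s by rewrite /in_range; lia.
have [_ _ pps] := PP r rr.
have ps : pi s = r by rewrite -pr pps.
move: (kr); rewrite /in_range => kr'.
rewrite (C_D lab k x PP sr rr ps pr sltr) /stepF.
case: (ltnP k s) => h1.
  have ks : k != s by rewrite neq_ltn h1.
  have kR : k != r by rewrite neq_ltn (ltn_trans h1 sltr).
  by rewrite Hu //= addn0.
case: (eqVneq k s) => [->|ks].
  rewrite /= (um_count PP sr rr ps pr Hu); last by lia.
  rewrite -(Dstep lab x PP sr rr ps pr) ?eqxx //.
  by rewrite sltr /= ls addnC.
case: (ltnP k r) => h2.
  have kR : k != r by rewrite neq_ltn h2.
  by rewrite /= Hu // ls addnC.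
case: (eqVneq k r) => [->|kR].
  rewrite (um_count PP sr rr ps pr Hu); last by lia.
  rewrite -(Dstep lab x PP sr rr ps pr) ?eqxx ?orbT //; last by lia.
  by rewrite /= addn0.
by rewrite Hu //= addn0.
Qed.


Lemma mem_R n s r k :
  (k \in remaining n s r) = [&& 1 <= k <= n, k != s & k != r].
Proof.
rewrite /remaining mem_filter mem_iota.
case: (k != s); case: (k != r); rewrite /= ?andbF ?andbT //.
Qed.

Lemma uniq_R n s r : uniq (remaining n s r).
Proof. exact: filter_uniq (iota_uniq _ _). Qed.

Lemma sorted_R n s r : sorted ltn (remaining n s r).
Proof. exact: (sorted_filter ltn_trans _ (iota_ltn_sorted 1 n)). Qed.

Lemma size_R n s r : in_range n s -> in_range n r -> s != r ->
  size (remaining n s r) = n - 2.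
Proof.
move=> sr rr sNr.
rewrite /remaining size_filter.
have H1 := @count_pw_add _ predT (fun k => (k != s) && (k != r))
   (fun k => (k == s) || (k == r)) (iota 1 n).
have H2 := @count_pw_add _ (fun k => (k == s) || (k == r)) (fun k => (k == s) && true)
   (fun k => (k == r) && true) (iota 1 n).
rewrite !count_eq1 ?iota_uniq // !mem_iota count_predT size_iota in H1 H2.
move: sr rr; rewrite /in_range => sr rr.
have e1 : (1 <= s < 1 + n) by lia.
have e2 : (1 <= r < 1 + n) by lia.
rewrite e1 e2 in H2.
have E1 : forall a, a \in iota 1 n -> predT a = (a != s) && (a != r) + ((a == s) || (a == r)) :> nat.
  by move=> a _; case: (eqVneq a s); case: (eqVneq a r).
have E2 : forall a, a \in iota 1 n -> (a == s) || (a == r) = (a == s) && true + (a == r) && true :> nat.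
  move=> a _; case: (eqVneq a s) => [Es|Ns]; case: (eqVneq a r) => [Er|Nr] //=.
  by move: sNr; rewrite -Es -Er eqxx.
move: (H1 E1) (H2 E2) => /=; lia.
Qed.

Lemma relab_range n s r k : k \in remaining n s r ->
  1 <= relab n s r k <= size (remaining n s r).
Proof. by rewrite /relab -index_mem => h; rewrite ltnS h. Qed.

Lemma unrelab_relab n s r k : k \in remaining n s r ->
  unrelab n s r (relab n s r k) = k.
Proof. by move=> h; rewrite /unrelab /relab /= nth_index. Qed.

Lemma unrelab_mem n s r j : 1 <= j <= size (remaining n s r) ->
  unrelab n s r j \in remaining n s r.
Proof. move=> h; rewrite /unrelab; apply: mem_nth; by case: j h => // j /andP []. Qed.

Lemma relab_unrelab n s r j : 1 <= j <= size (remaining n s r) ->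
  relab n s r (unrelab n s r j) = j.
Proof.
move=> h; rewrite /unrelab /relab index_uniq ?uniq_R //; case: j h => // j /andP [].
Qed.

Lemma relab_le n s r a k : a \in remaining n s r -> k \in remaining n s r ->
  (relab n s r a <= relab n s r k) = (a <= k).
Proof.
move=> ha hk; rewrite /relab ltnS.
apply/idP/idP => h.
  have so : sorted leq (remaining n s r).
    exact: (sorted_filter leq_trans _ (iota_sorted 1 n)).
  exact: (@sorted_leq_index _ leq leq_trans leqnn (remaining n s r) so a k ha hk h).
rewrite leqNgt; apply/negP => h'.
have := sorted_ltn_index ltn_trans (sorted_R n s r) k a hk ha h'.
lia.
Qed.

Lemma relab_lt n s r a k : a \in remaining n s r -> k \in remaining n s r ->
  (relab n s r a < relab n s r k) = (a < k).
Proof. move=> ha hk; have := relab_le hk ha; rewrite /relab !ltnS => e; by rewrite ltnNge e -ltnNge. Qed.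

Lemma map_relab n s r :
  map (relab n s r) (remaining n s r) = iota 1 (size (remaining n s r)).
Proof.
apply: (@eq_from_nth _ 0); first by rewrite size_map size_iota.
move=> i; rewrite size_map => hi.
rewrite (nth_map 0) // nth_iota // /relab index_uniq ?uniq_R //.
Qed.

Definition rr n (pi : nat -> nat) := head 0 [seq k <- iota 1 n | pi k < k].

Lemma head_filter_min (P : pred nat) l m k :
  m <= k < head 0 [seq x <- iota m l | P x] -> ~~ P k.
Proof.
elim: l m => [|l IH] m /=; first by lia.
case: (boolP (P m)) => Pm /=; first by lia.
case: (eqVneq k m) => [->|km] // h.
apply: (IH m.+1); move: h km; lia.
Qed.

Lemma rr_facts n pi : is_pair_partition n pi -> 0 < n ->
  [/\ 1 <= rr n pi <= n, pi (rr n pi) < rr n pi &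
      forall k, 1 <= k < rr n pi -> k < pi k].
Proof.
move=> PP n0.
have nr : in_range n n by rewrite /in_range; lia.
have [pnr pnn _] := PP n nr.
have hin : n \in [seq k <- iota 1 n | pi k < k].
  rewrite mem_filter mem_iota; move: pnr pnn; rewrite /in_range; lia.
have hr : rr n pi \in [seq k <- iota 1 n | pi k < k].
  rewrite /rr; move: hin; case: [seq _ <- _ | _] => //= a l _.
  exact: mem_head.
move: hr; rewrite mem_filter mem_iota => /andP [h1 h2].
split => //.
move=> k hk.
have := @head_filter_min (fun k => pi k < k) n 1 k hk.
rewrite -leqNgt => h.
have kr : in_range n k by rewrite /in_range; lia.
have [_ pkk _] := PP k kr.
move: pkk h; lia.
Qed.

Lemma sg_pp n pi s r : is_pair_partition n pi -> in_range n s -> in_range n r ->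
  pi s = r -> pi r = s ->
  is_pair_partition (size (remaining n s r))
    (fun j => relab n s r (pi (unrelab n s r j))).
Proof.
move=> PP sr rr ps pr j jr.
have aR := unrelab_mem jr.
set a := unrelab n s r j in aR *.
have jE : relab n s r a = j by rewrite relab_unrelab.
move: (aR); rewrite mem_R => /and3P [ar aS aR'].
have [par paa ppa] := PP a ar.
have paR : pi a \in remaining n s r.
  rewrite mem_R (par : is_true (1 <= pi a <= n)) /=; apply/andP; split.
    by apply/eqP => e; move/eqP: aR'; apply; rewrite -ppa e ps.
  by apply/eqP => e; move/eqP: aS; apply; rewrite -ppa e pr.
split.
- exact: relab_range.
- apply/eqP => e; move/eqP: paa; apply.
  by rewrite -(unrelab_relab paR) e -jE unrelab_relab.
- by rewrite unrelab_relab // ppa jE.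
Qed.

Lemma sg_lab L n pi (lab : nat -> 'I_L) s r : is_pair_partition n pi ->
  in_range n s -> in_range n r -> pi s = r -> pi r = s ->
  (forall k, in_range n k -> lab (pi k) = lab k) ->
  forall j, in_range (size (remaining n s r)) j ->
  lab (unrelab n s r (relab n s r (pi (unrelab n s r j)))) = lab (unrelab n s r j).
Proof.
move=> PP sr rr ps pr Hl j jr.
have aR := unrelab_mem jr.
set a := unrelab n s r j in aR *.
move: (aR); rewrite mem_R => /and3P [ar aS aR'].
have [par paa ppa] := PP a ar.
have paR : pi a \in remaining n s r.
  rewrite mem_R (par : is_true (1 <= pi a <= n)) /=; apply/andP; split.
    by apply/eqP => e; move/eqP: aR'; apply; rewrite -ppa e ps.
  by apply/eqP => e; move/eqP: aS; apply; rewrite -ppa e pr.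
by rewrite unrelab_relab // Hl.
Qed.

Lemma C_relab L n pi (lab : nat -> 'I_L) s r k x : is_pair_partition n pi ->
  in_range n s -> in_range n r -> pi s = r -> pi r = s ->
  k \in remaining n s r ->
  Cn (size (remaining n s r)) (fun j => relab n s r (pi (unrelab n s r j)))
     (fun j => lab (unrelab n s r j)) (relab n s r k) x = Dn n pi lab s r k x.
Proof.
move=> PP sr rr ps pr kR.
have -> : Dn n pi lab s r k x = count (fun a => (a <= k < pi a) && (lab a == x)) (remaining n s r).
  rewrite /Dn /remaining count_filter; apply: eq_count => a /=; by rewrite !andbA.
rewrite /Cn -map_relab count_map.
apply: eq_in_count => a aR /=.
move: (aR); rewrite mem_R => /and3P [ar aS aR'].
have [par paa ppa] := PP a ar.
have paR : pi a \in remaining n s r.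
  rewrite mem_R (par : is_true (1 <= pi a <= n)) /=; apply/andP; split.
    by apply/eqP => e; move/eqP: aR'; apply; rewrite -ppa e ps.
  by apply/eqP => e; move/eqP: aS; apply; rewrite -ppa e pr.
by rewrite !unrelab_relab // relab_le // relab_lt.
Qed.

Lemma Phi_step L p pi (lab : nat -> 'I_L) k : 0 < p ->
  Phi p.+1 pi lab k =
  stepF (fun k => Phi p
     (fun j => relab p.+1.*2 (pi (rr p.+1.*2 pi)) (rr p.+1.*2 pi)
                 (pi (unrelab p.+1.*2 (pi (rr p.+1.*2 pi)) (rr p.+1.*2 pi) j)))
     (fun j => lab (unrelab p.+1.*2 (pi (rr p.+1.*2 pi)) (rr p.+1.*2 pi) j))
     (relab p.+1.*2 (pi (rr p.+1.*2 pi)) (rr p.+1.*2 pi) k))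
   (lab (rr p.+1.*2 pi)) (pi (rr p.+1.*2 pi)) (rr p.+1.*2 pi) k.
Proof. by case: p. Qed.

Lemma Phi_count L p : 0 < p -> forall pi (lab : nat -> 'I_L),
  is_pair_partition p.*2 pi -> (forall k, in_range p.*2 k -> lab (pi k) = lab k) ->
  forall k, in_range p.*2 k -> forall x,
  count_mem x (Phi p pi lab k) = Cn p.*2 pi lab k x.
Proof.
elim: p => [//|p IH] _ pi lab PP Hl k kr x.
case: (posnP p) => [p0|pp].
  subst p.
  have r1 : in_range 2 1 by [].
  have [p1r p11 pp1] := PP 1 r1.
  have e1 : pi 1 = 2 by move: p1r p11; rewrite /in_range; lia.
  have e2 : pi 2 = 1 by rewrite -e1 pp1.
  move: kr; rewrite /in_range /Cn /= e1 e2 => kr.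
  have [->|->] : k = 1 \/ k = 2 by lia.
    by [].
  by [].
rewrite Phi_step //.
set n := p.+1.*2 in PP Hl kr *.
have n0 : 0 < n by rewrite /n; lia.
have [r1 r2 r3] := rr_facts PP n0.
set r := rr n pi in r1 r2 r3 *.
set s := pi r in r2 *.
have rr : in_range n r by [].
have [sr _ ps] := PP r rr.
have s1 : 1 <= s by move: sr; rewrite /in_range; lia.
have sNr : s != r by rewrite neq_ltn r2.
have szR : size (remaining n s r) = p.*2.
  by rewrite size_R // /n; lia.
apply: stepF_count => //; first by move: r1; lia.
  by rewrite Hl.
move=> j jr js jR.
have jRR : j \in remaining n s r by rewrite mem_R jr js jR.
have PP' := sg_pp PP sr rr ps erefl.
have Hl' := sg_lab PP sr rr ps erefl Hl.
rewrite szR in PP' Hl'.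
rewrite IH //.
  by rewrite -szR C_relab.
by rewrite /in_range -szR relab_range.
Qed.

Theorem lemma3p3 (L : nat) (G : rel 'I_L) (p : nat) :
  simple_loopless G -> 1 <= p ->
  forall (pi1 pi2 : nat -> nat) (lab1 lab2 : nat -> 'I_L),
    in_Pi G p.*2 pi1 lab1 -> in_Pi G p.*2 pi2 lab2 ->
    (forall k, in_range p.*2 k ->
       trace_eq G (Phi p pi1 lab1 k) (Phi p pi2 lab2 k)) ->
    forall k, in_range p.*2 k -> pi1 k = pi2 k /\ lab1 k = lab2 k.
Proof.
move=> [_ irr] p1 pi1 pi2 lab1 lab2 P1 P2 HT.
apply: (inj_from_counts irr P1 P2) => k kr x.
have P1' := P1; have P2' := P2.
case: P1' => [PP1 L1 _]; case: P2' => [PP2 L2 _].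
rewrite -(Phi_count p1 PP1 L1 kr) -(Phi_count p1 PP2 L2 kr).
exact: trace_count (HT k kr) x.
Qed.
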